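(* Let $\lambda$ be a partition of $n$. Then $\mathcal{I}_\lambda=\mathcal{M}_\lambda+\mathcal{E}_\lambda+\mathcal{K}_\lambda$, where $\mathcal{M}_\lambda$ is the ideal generated by all square-free monomials of degree $n-\lambda_1+1$ in $x_1,\dots,x_n$; $\mathcal{E}_\lambda$ is the ideal generated by $e_1(x_1,\dots,x_n),\dots,e_{\ell(\lambda)-1}(x_1,\dots,x_n)$; $\mathcal{K}_\lambda$ is the ideal generated by the elements of the sets $e_r(m)$, where $n-1\ge m\ge n-\lambda_1+1$ and $r$ is an entry of the regular filling of $\lambda$ lying in the same column as the entry $m$ (namely column $n-m$, whose bottom cell contains $m$) and strictly above it.
   Context: $k$ is a field of characteristic $0$ and $R=k[x_1,\dots,x_n]$. For a set $S$ of variables, $e_r(S)$ is the $r$-th elementary symmetric polynomial in the variables of $S$ ($e_0=1$, and $e_r(S)=0$ if $r>|S|$). For $1\le m\le n$, $e_r(m)$ denotes the set $\{e_r(S): S\subseteq\{x_1,\dots,x_n\},\ |S|=m\}$. A partition $\lambda=(\lambda_1\ge\lambda_2\ge\cdots)$ of $n$ has length $\ell(\lambda)$ (number of nonzero parts) and conjugate $\lambda'$ with $\lambda'_i=\#\{j:\lambda_j\ge i\}$. The Young diagram of $\lambda$ is drawn with rows counted from the bottom: the bottom row has $\lambda_1$ cells, the next $\lambda_2$, etc., left-justified; columns are numbered $0,1,\dots,\lambda_1-1$ from left to right, and column $c$ has height $\lambda'_{c+1}$. For $1\le m\le n$ put $\delta_m(\lambda)=\lambda'_n+\cdots+\lambda'_{n-m+1}$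 (with $\lambda'_i=0$ for $i>\lambda_1$). The De Concini–Procesi ideal $\mathcal{I}_\lambda\subseteq R$ is the ideal generated by all elements of the sets $e_r(m)$ with $1\le m\le n$ and $m\ge r>m-\delta_m(\lambda)$. The regular filling of $\lambda$: for each column $c$, the bottom cell of column $c$ receives $n-c$, and the remaining $\lambda'_{c+1}-1$ cells of column $c$ receive, from top to bottom, the consecutive integers $1+\sum_{d<c}(\lambda'_{d+1}-1),\dots,\sum_{d\le c}(\lambda'_{d+1}-1)$. *)

(* Defs.v *)
From mathcomp Require Import all_boot all_order all_algebra.
From mathcomp Require Import mpoly.
Set Implicit Arguments. Unset Strict Implicit. Unset Printing Implicit Defensive.
Import GRing.Theory.
Local Open Scope ring_scope.

(* Partitions: a partition of n is a weakly decreasing list of positive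
   parts summing to n; lambda_i (i >= 1) is nth 0 la i.-1. *)
Definition is_partition (n : nat) (la : seq nat) : bool :=
  [&& sorted geq la, all (fun a => 0 < a)%N la & sumn la == n].

Definition part1 (la : seq nat) : nat := head 0%N la.

Definition plen (la : seq nat) : nat := size la.

Definition conj_part (la : seq nat) (i : nat) : nat := count (fun a => i <= a)%N la.

Definition delta (n : nat) (la : seq nat) (m : nat) : nat :=
  (\sum_(n - m + 1 <= i < n + 1) conj_part la i)%N.

(* regular filling: entry of the cell in column c (0-indexed, from the left)
   and row j (0-indexed, counted from the bottom).  The bottom cell (j = 0)
   gets n - c; the cells above receive, from top to bottom, the consecutive
   integers 1 + A, ..., A + (lambda'_{c+1} - 1), A = sum_{d<c} (lambda'_{d+1} - 1). *)
Definition reg_filling (n : nat) (la : seq nat) (c j : nat) : nat :=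
  if j == 0%N then (n - c)%N
  else ((\sum_(d < c) (conj_part la d.+1 - 1)) + (conj_part la c.+1 - j))%N.

Section Poly.
Variables (k : fieldType) (n : nat).

Definition esym (S : {set 'I_n}) (r : nat) : {mpoly k[n]} :=
  \sum_(T : {set 'I_n} | (T \subset S) && (#|T| == r)) \prod_(i in T) 'X_i.

Definition ideal_gen (G : {mpoly k[n]} -> Prop) (p : {mpoly k[n]}) : Prop :=
  exists l : seq ({mpoly k[n]} * {mpoly k[n]}),
    (forall q, q \in l -> G q.2) /\ p = \sum_(q <- l) q.1 * q.2.

Definition idealD (I J : {mpoly k[n]} -> Prop) (p : {mpoly k[n]}) : Prop :=
  exists a b, I a /\ J b /\ p = a + b.

Definition DP_gens (la : seq nat) (p : {mpoly k[n]}) : Prop :=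
  exists (m r : nat) (S : {set 'I_n}),
    [/\ (1 <= m <= n)%N, (m - delta n la m < r <= m)%N, #|S| = m & p = esym S r].
Definition DP_ideal (la : seq nat) := ideal_gen (DP_gens la).

Definition M_gens (la : seq nat) (p : {mpoly k[n]}) : Prop :=
  exists S : {set 'I_n}, #|S| = (n - part1 la + 1)%N /\ p = \prod_(i in S) 'X_i.
Definition M_ideal (la : seq nat) := ideal_gen (M_gens la).

Definition E_gens (la : seq nat) (p : {mpoly k[n]}) : Prop :=
  exists r : nat, (1 <= r < plen la)%N /\ p = esym [set: 'I_n] r.
Definition E_ideal (la : seq nat) := ideal_gen (E_gens la).

Definition K_gens (la : seq nat) (p : {mpoly k[n]}) : Prop :=
  exists (m j : nat) (S : {set 'I_n}),
    [/\ (n - part1 la + 1 <= m <= n - 1)%N,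
        (1 <= j < conj_part la (n - m).+1)%N,
        #|S| = m & p = esym S (reg_filling n la (n - m) j)].
Definition K_ideal (la : seq nat) := ideal_gen (K_gens la).

End Poly.

(* Main.v *)
Require Import Defs.
From mathcomp Require Import all_boot all_order all_algebra.
From mathcomp Require Import mpoly zify.
Import GRing.Theory.
Local Open Scope ring_scope.
Set Implicit Arguments. Unset Strict Implicit.

Section Ideals.
Variables (k : fieldType) (n : nat).
Local Notation P := {mpoly k[n]}.

Definition closedI (I : P -> Prop) :=
  [/\ I 0, (forall a b, I a -> I b -> I (a + b)) & (forall c a, I a -> I (c * a))].

Lemma ideal_gen_closed G : closedI (ideal_gen G).
Proof.
split.
- by exists [::]; split => //; rewrite big_nil.
- move=> a b [l1 [H1 ->]] [l2 [H2 ->]]; exists (l1 ++ l2); split; last by rewrite big_cat.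
  by move=> q; rewrite mem_cat => /orP [/H1|/H2].
- move=> c a [l [H ->]]; exists [seq (c * q.1, q.2) | q <- l]; split.
  + by move=> q /mapP [q' /H Hq ->].
  + by rewrite big_map mulr_sumr; apply: eq_bigr => q _; rewrite mulrA.
Qed.

Lemma ideal_gen_in (G : P -> Prop) p : G p -> ideal_gen G p.
Proof.
move=> Gp; exists [:: (1, p)]; split; first by move=> q; rewrite inE => /eqP ->.
by rewrite big_seq1 mul1r.
Qed.

Lemma ideal_gen_min G I : closedI I -> (forall p, G p -> I p) ->
  forall p, ideal_gen G p -> I p.
Proof.
move=> [I0 ID IM] HG p [l [Hl ->]]; elim: l Hl => [|q l IH] Hl.
  by rewrite big_nil.
rewrite big_cons; apply: ID; first by apply: IM; apply: HG; apply: Hl; rewrite inE eqxx.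
by apply: IH => q' Hq'; apply: Hl; rewrite inE Hq' orbT.
Qed.

Lemma idealD_closed I J : closedI I -> closedI J -> closedI (idealD I J).
Proof.
move=> [I0 ID IM] [J0 JD JM]; split.
- by exists 0, 0; rewrite addr0.
- move=> _ _ [a1 [b1 [Ha1 [Hb1 ->]]]] [a2 [b2 [Ha2 [Hb2 ->]]]].
  by exists (a1 + a2), (b1 + b2); split; [exact: ID|split; [exact: JD|rewrite addrACA]].
- move=> c _ [a [b [Ha [Hb ->]]]]; exists (c * a), (c * b).
  by split; [exact: IM|split; [exact: JM|rewrite mulrDr]].
Qed.

Lemma idealD_l (I J : P -> Prop) p : closedI J -> I p -> idealD I J p.
Proof. by move=> [J0 _ _] Ip; exists p, 0; rewrite addr0. Qed.

Lemma idealD_r (I J : P -> Prop) p : closedI I -> J p -> idealD I J p.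
Proof. by move=> [I0 _ _] Jp; exists 0, p; rewrite add0r. Qed.

Lemma idealD_min (I J K : P -> Prop) : closedI K -> (forall p, I p -> K p) ->
  (forall p, J p -> K p) -> forall p, idealD I J p -> K p.
Proof. by move=> [_ KD _] HI HJ p [a [b [Ha [Hb ->]]]]; apply: KD; auto. Qed.

Lemma closed_sum (I : P -> Prop) (T : Type) (r : seq T) (Q : pred T) F :
  closedI I -> (forall i, Q i -> I (F i)) -> I (\sum_(i <- r | Q i) F i).
Proof.
move=> [I0 ID _] H; apply: (big_ind I) => //.
Qed.

End Ideals.

Lemma sum_ind_min (a N : nat) : (\sum_(1 <= i < N.+1) (i <= a : nat) = minn a N)%N.
Proof.
elim: N => [|N IH]; first by rewrite big_geq //; lia.
rewrite big_nat_recr //= IH.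
case: (leqP N.+1 a) => H /=; lia.
Qed.

Lemma total_conj (la : seq nat) N : (forall a, a \in la -> a <= N)%N ->
  (\sum_(1 <= i < N.+1) conj_part la i = sumn la)%N.
Proof.
elim: la => [|a l IH] H.
  by rewrite /conj_part big1 //.
rewrite /conj_part /= big_split /= -/(conj_part l) /=.
rewrite IH; last by move=> b Hb; apply: H; rewrite inE Hb orbT.
rewrite sum_ind_min; have := H a (mem_head _ _); lia.
Qed.

Lemma sub1_sum (c : nat) (f : nat -> nat) : (forall d, d < c -> 1 <= f d)%N ->
  (\sum_(d < c) (f d - 1) + c = \sum_(d < c) f d)%N.
Proof.
elim: c => [|c IH] H; first by rewrite !big_ord0.
rewrite !big_ord_recr /= -IH; last by move=> d Hd; apply: H; lia.
have := H c (ltnSn c). move=> h; rewrite -!addnA; apply/eqP; rewrite eqn_add2l; apply/eqP; lia.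
Qed.

Section Part.
Variables (n : nat) (la : seq nat).
Hypothesis Hla : is_partition n la.

Lemma parts_le_head a : a \in la -> (a <= part1 la)%N.
Proof.
case/and3P: Hla => Hs _ _; case: la Hs => [|x s] //= Hs.
rewrite inE => /orP [/eqP -> //|Ha].
have := order_path_min (leT := geq) _ Hs.
move=> /(_ _) /allP H; apply: H => //.
by move=> y z w /= H1 H2; apply: leq_trans H2 H1.
Qed.

Lemma part_le_sum a : a \in la -> (a <= n)%N.
Proof.
case/and3P: Hla => _ _ /eqP <-; elim: la => [|x s IH] //=.
rewrite inE => /orP [/eqP ->|Ha]; first by apply: leq_addr.
by apply: leq_trans (IH Ha) (leq_addl _ _).
Qed.

Lemma head_le_n : (part1 la <= n)%N.
Proof.
case E: la => [|x s] /=; first by [].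
by apply: part_le_sum; rewrite E mem_head.
Qed.

Lemma plen_le : (plen la <= n)%N.
Proof.
case/and3P: Hla => _ Hp /eqP <-; rewrite /plen; elim: la Hp => [|x s IH] //= /andP [Hx Hs].
by have := IH Hs; lia.
Qed.

Lemma conj_pos i : (1 <= i <= part1 la)%N -> (0 < conj_part la i)%N.
Proof.
case E: la => [|x s] /=; first by lia.
move=> /andP [_ Hi]; rewrite /conj_part /= Hi; lia.
Qed.

Lemma conj_zero i : (part1 la < i)%N -> conj_part la i = 0%N.
Proof.
move=> Hi; apply/eqP; rewrite /conj_part -leqn0 leqNgt -has_count.
apply/hasP => [[a Ha Hia]]; have := @parts_le_head a Ha; lia.
Qed.

Lemma conj1 : conj_part la 1 = plen la.
Proof.
case/and3P: Hla => _ Hp _; rewrite /conj_part /plen.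
by apply/eqP; rewrite -all_count.
Qed.

Lemma total : (\sum_(1 <= i < n.+1) conj_part la i = n)%N.
Proof.
rewrite total_conj; first by case/and3P: Hla => _ _ /eqP.
exact: part_le_sum.
Qed.

Lemma delta_split c : (c <= n)%N ->
  (\sum_(d < c) conj_part la d.+1 + delta n la (n - c) = n)%N.
Proof.
move=> Hc; rewrite /delta subKn // !addn1 -[X in _ = X]total (@big_cat_nat _ _ _ c.+1 1 n.+1) //=; try lia.
by rewrite [in RHS]big_add1 /= big_mkord.
Qed.

Lemma Asum c : (c <= part1 la)%N ->
  (\sum_(d < c) (conj_part la d.+1 - 1) + c = \sum_(d < c) conj_part la d.+1)%N.
Proof.
move=> Hc; apply: (@sub1_sum c (fun d => conj_part la d.+1)) => d Hd; apply: conj_pos; lia.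
Qed.

Lemma delta_step m : (1 <= m <= n)%N ->
  delta n la m = (conj_part la (n - m).+1 + delta n la m.-1)%N.
Proof.
move=> Hm; rewrite /delta big_ltn; last by lia.
by congr (_ + _)%N; [congr conj_part; lia | congr (\sum_(_ <= i < _) _)%N; lia].
Qed.

Lemma delta_small m : (m < n - part1 la + 1)%N -> delta n la m = 0%N.
Proof.
move=> Hm; rewrite /delta big_nat_cond big1 // => i /andP [/andP [Hi _] _].
apply: conj_zero; have := head_le_n; lia.
Qed.

End Part.

Section Polys.
Variables (k : fieldType) (n : nat).
Local Notation P := {mpoly k[n]}.
Local Notation e := (Defs.esym k).

Lemma esym_big (S : {set 'I_n}) r : (#|S| < r)%N -> e S r = 0.
Proof.
move=> H; rewrite /Defs.esym big_pred0 // => T; apply/negbTE/andP => [[Hs /eqP Hc]].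
have := subset_leq_card Hs; lia.
Qed.

Lemma esym_top (S : {set 'I_n}) : e S #|S| = \prod_(i in S) 'X_i.
Proof.
rewrite /Defs.esym (big_pred1 S) // => T /=; rewrite eqEcard.
case: (boolP (T \subset S)) => H //=; rewrite eqn_leq subset_leq_card //.
Qed.

Lemma esym_rec (S : {set 'I_n}) r :
  (#|S| - r)%:R * e S r = \sum_(x in S) e (S :\ x) r.
Proof.
rewrite /Defs.esym mulr_sumr.
rewrite (exchange_big_dep (fun T : {set 'I_n} => (T \subset S) && (#|T| == r))); last first.
  by move=> x T Hx; rewrite subsetD1 => /andP [/andP [-> _] ->].
apply: eq_bigr => T /andP [HTS /eqP HTr].
rewrite [RHS](eq_bigl (fun x => x \in S :\: T)); last first.
  by move=> x; rewrite subsetD1 HTS HTr eqxx in_setD andbC /= andbT.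
by rewrite sumr_const cardsDS // HTr mulr_natl.
Qed.

Lemma subset_card_ex (T : {set 'I_n}) m : (m <= #|T|)%N ->
  exists U : {set 'I_n}, U \subset T /\ #|U| = m.
Proof.
elim: m => [|m IH] H; first by exists set0; rewrite sub0set cards0.
have [U [HU HUc]] := IH (ltnW H).
have : (0 < #|T :\: U|)%N by rewrite cardsDS //; lia.
rewrite card_gt0 => /set0Pn [x]; rewrite in_setD => /andP [HxU HxT].
exists (x |: U); split; first by rewrite subUset sub1set HxT HU.
by rewrite cardsU1 HxU HUc.
Qed.

End Polys.

Lemma arithK (A Sg D1 D0 h c m r n : nat) : (A + c = Sg -> Sg + D1 = n -> D1 = h + D0 ->
  c = n - m.+1 -> m.+1 - D1 < r -> r <= m - D0 -> m.+1 <= n ->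
  [/\ 1 <= h - (r - A), h - (r - A) < h & A + (h - (h - (r - A))) = r])%N.
Proof. move=> *; split; lia. Qed.

Lemma arithK2 (A Sg D1 D0 h c m j n : nat) : (A + c = Sg -> Sg + D1 = n -> D1 = h + D0 ->
  c = n - m -> 1 <= m <= n -> 1 <= j < h ->
  m - D1 < A + (h - j) <= m)%N.
Proof. move=> *; lia. Qed.

Section Main.
Variables (k : fieldType) (n : nat) (la : seq nat).
Hypothesis Hchar : [pchar k] =i pred0.
Hypothesis Hla : is_partition n la.
Local Notation e := (Defs.esym k).
Local Notation P := {mpoly k[n]}.

Definition Jid : P -> Prop := idealD (idealD (M_ideal la) (E_ideal la)) (K_ideal la).

Lemma closedJ : closedI Jid.
Proof. by apply: idealD_closed; [apply: idealD_closed|]; apply: ideal_gen_closed. Qed.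

Lemma M_J p : M_ideal la p -> Jid p.
Proof.
move=> H; apply: idealD_l; first exact: ideal_gen_closed.
by apply: idealD_l; first exact: ideal_gen_closed.
Qed.

Lemma E_J p : E_ideal la p -> Jid p.
Proof.
move=> H; apply: idealD_l; first exact: ideal_gen_closed.
by apply: idealD_r; first exact: ideal_gen_closed.
Qed.

Lemma K_J p : K_ideal la p -> Jid p.
Proof.
move=> H; apply: idealD_r => //.
by apply: idealD_closed; apply: ideal_gen_closed.
Qed.

Lemma prod_in_M (T : {set 'I_n}) : (n - part1 la + 1 <= #|T|)%N ->
  M_ideal la (\prod_(i in T) 'X_i : P).
Proof.
move=> H; have [U [HU HUc]] := subset_card_ex H.
rewrite (big_setID U) /= (setIidPr HU) mulrC.
have [_ _ HM] := @ideal_gen_closed k n (M_gens la); apply: (HM _ _).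
apply: (@ideal_gen_in k n); by exists U.
Qed.

Lemma esym_M (S : {set 'I_n}) r : (n - part1 la + 1 <= r)%N -> M_ideal la (e S r).
Proof.
move=> H; apply: closed_sum; first exact: ideal_gen_closed.
by move=> T /andP [_ /eqP HT]; apply: prod_in_M; rewrite HT.
Qed.

Lemma card_le_n (S : {set 'I_n}) : (#|S| <= n)%N.
Proof. by have := max_card (mem S); rewrite card_ord. Qed.

Lemma forward m : forall S : {set 'I_n}, #|S| = m ->
  forall r, (m - delta n la m < r)%N -> Jid (e S r).
Proof.
have [J0 JD JM] := closedJ.
elim: m => [|m IH] S HS r Hr.
  by rewrite esym_big // HS; lia.
case: (leqP (n - part1 la + 1) r) => Hr0; first by apply: M_J; apply: esym_M.
case: (leqP r m.+1) => Hrm; last by rewrite esym_big // HS.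
have Hm0 : (n - part1 la + 1 <= m.+1)%N.
  rewrite leqNgt; apply/negP => H; move: Hr; rewrite delta_small //; lia.
have Hmn : (m.+1 <= n)%N by rewrite -HS card_le_n.
have Hp1 := head_le_n Hla.
have Hstep := @delta_step n la Hla m.+1 ltac:(lia).
have Hsplit := @delta_split n la Hla (n - m.+1) ltac:(lia).
rewrite (_ : (n - (n - m.+1))%N = m.+1) in Hsplit; last by lia.
have HA := @Asum n la Hla (n - m.+1) ltac:(lia).
rewrite /= in Hstep.
case: (ltnP (m - delta n la m) r) => Hr1.
  have Hrec := esym_rec k S r; rewrite HS in Hrec.
  have Hc : ((m.+1 - r)%:R : k) != 0.
    by move/pcharf0P: Hchar => Hc0; rewrite Hc0; lia.
  have -> : e S r = ((m.+1 - r)%:R^-1 : k)%:MP * \sum_(x in S) e (S :\ x) r.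
    by rewrite -Hrec mul_mpolyC mulr_natl -scaler_nat scalerA mulVf // scale1r.
  apply: JM; apply: closed_sum; first exact: closedJ.
  move=> x Hx; apply: IH => //.
  by have := cardsD1 x S; rewrite Hx HS /=; lia.
case: (ltnP m.+1 n) => Hmn'.
  apply: K_J; apply: (@ideal_gen_in k n).
  have [H1 H2 H3] := arithK HA Hsplit Hstep erefl Hr Hr1 Hmn.
  exists m.+1, (conj_part la (n - m.+1).+1 - (r - \sum_(d < n - m.+1) (conj_part la d.+1 - 1)))%N, S.
  split => //; first by lia.
    by rewrite H1 H2.
  rewrite /reg_filling.
  have -> : ((conj_part la (n - m.+1).+1 - (r - \sum_(d < n - m.+1) (conj_part la d.+1 - 1)))%N == 0%N) = false.
    by apply/eqP; lia.
  by rewrite H3.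
apply: E_J; apply: (@ideal_gen_in k n).
have Hmn2 : m.+1 = n by lia.
have Hd := @delta_split n la Hla 0 (leq0n _); rewrite big_ord0 subn0 /= in Hd.
have Hc1 := conj1 Hla.
rewrite (_ : (n - m.+1).+1 = 1)%N in Hstep; last by lia.
exists r; split.
  rewrite Hmn2 in Hstep; lia.
congr (e _ _); apply/eqP; rewrite eqEcard subsetT cardsT card_ord HS Hmn2 leqnn.
by []. Qed.

Lemma DP_in_J p : DP_ideal la p -> Jid p.
Proof.
apply: ideal_gen_min; first exact: closedJ.
move=> q [m [r [S [Hm Hr HS ->]]]].
by apply: (@forward m) => //; case/andP: Hr.
Qed.

Lemma J_in_DP p : Jid p -> DP_ideal la p.
Proof.
have Hc := @ideal_gen_closed k n (DP_gens la).
move: p; rewrite /Jid.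
apply: (idealD_min Hc); [apply: (idealD_min Hc); [apply: (ideal_gen_min Hc) | apply: (ideal_gen_min Hc)] | apply: (ideal_gen_min Hc)].
- move=> q [S [HS ->]]; apply: (@ideal_gen_in k n).
  have Hn := card_le_n S; have Hp1 := head_le_n Hla.
  have Hstep := @delta_step n la Hla #|S| ltac:(lia).
  have Hpos := @conj_pos n la Hla (n - #|S|).+1 ltac:(lia).
  exists #|S|, #|S|, S; split => //; first lia.
    lia.
  by rewrite esym_top.
- move=> q [r [Hr ->]]; apply: (@ideal_gen_in k n).
  have Hpl := plen_le Hla.
  have Hd := @delta_split n la Hla 0 (leq0n _); rewrite big_ord0 subn0 /= in Hd.
  exists n, r, setT; split; [lia | lia | by rewrite cardsT card_ord | by []].
- move=> q [m [j [S [Hm Hj HS ->]]]]; apply: (@ideal_gen_in k n).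
  have Hp1 := head_le_n Hla.
  have Hstep := @delta_step n la Hla m ltac:(lia).
  have Hsplit := @delta_split n la Hla (n - m) ltac:(lia).
  rewrite (_ : (n - (n - m))%N = m) in Hsplit; last by lia.
  have HA := @Asum n la Hla (n - m) ltac:(lia).
  exists m, (reg_filling n la (n - m) j), S; split => //; first lia.
  rewrite /reg_filling (_ : (j == 0%N) = false); last by apply/eqP; lia.
  by apply: (arithK2 HA Hsplit Hstep erefl) => //; lia.
Qed.

End Main.

Unset Implicit Arguments.
Theorem mainTheorem4 (k : fieldType) (n : nat) (la : seq nat) :
  [pchar k] =i pred0 ->
  is_partition n la ->
  forall p : {mpoly k[n]},
    DP_ideal la p <->
    idealD (idealD (M_ideal la) (E_ideal la)) (K_ideal la) p.
Proof.
move=> Hc Hla p; split; [exact: DP_in_J | exact: J_in_DP].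
Qed.
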